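(* Let $n\in\mathbb{N}$ and $a\in\mathbb{R}$ with $|a|>5$. Let $\tilde{E}_n(a,1)$ be the $(n+1)\times n$ matrix whose $(i,j)$ entry is $a$ if $i=j$, $1$ if $j=i+1$, $a$ if $i=j+1$, $1$ if $i=j+2$, and $0$ otherwise, and let $\tilde{B}_n(a,1)$ be the $(n+3)\times n$ matrix whose first row is $(1,0,\dots,0)$, whose rows $2,\dots,n+2$ are the rows of $\tilde{E}_n(a,1)$ in order, and whose last row is $(0,\dots,0,1)$. For $1\le i<j<k\le n+3$, let $\tilde{B}_n(a,1)^{i,j,k}$ be the $n\times n$ matrix obtained by deleting the $i$-th, $j$-th and $k$-th rows of $\tilde{B}_n(a,1)$. Then $|\tilde{B}_n(a,1)^{i,j,k}|\neq0$.
   Context: $|M|$ denotes the determinant of a square matrix $M$. *)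

(* Defs.v *)
From mathcomp Require Import all_boot all_order all_algebra.
From mathcomp Require Import reals.
Set Implicit Arguments. Unset Strict Implicit. Unset Printing Implicit Defensive.
Import Order.TTheory GRing.Theory Num.Theory.
Local Open Scope ring_scope.

(* Indices are 0-based: paper's row/column p corresponds to Rocq index p-1. *)

Definition Etilde (R : nzRingType) (n : nat) (a : R) : 'M[R]_(n.+1, n) :=
  \matrix_(i < n.+1, j < n)
    (if (i : nat) == j then a
     else if (j : nat) == i.+1 then 1
     else if (i : nat) == j.+1 then a
     else if (i : nat) == j.+2 then 1
     else 0).

Definition Btilde (R : nzRingType) (n : nat) (a : R) : 'M[R]_(n.+3, n) :=
  \matrix_(r < n.+3, c < n)
    (if (r : nat) == 0%N then ((c : nat) == 0%N)%:R
     else if (r : nat) == n.+2 then ((c : nat) == n.-1)%:R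
     else Etilde n a (inord (r.-1)) c).

Definition kept_rows (n i j k : nat) : seq nat :=
  [seq x <- iota 0 n.+3 | x \notin [:: i; j; k]].

Definition del3rows (R : Type) (n : nat) (M : 'M[R]_(n.+3, n))
    (i j k : 'I_n.+3) : 'M[R]_n :=
  \matrix_(r < n, c < n) M (inord (nth 0%N (kept_rows n i j k) r)) c.

(* Main.v *)
Require Import Defs.
From mathcomp Require Import all_boot all_order all_algebra.
From mathcomp Require Import reals.
From mathcomp Require Import ring lra zify.
Import Order.TTheory GRing.Theory Num.Theory.
Local Open Scope ring_scope.

Lemma sum_pick (R : realType) N t (f : nat -> R) : (t < N)%N ->
  \sum_(s < N) ((s : nat) == t)%:R * f s = f t.
Proof.
move=> ht; rewrite (bigD1 (Ordinal ht)) //= eqxx mul1r big1 ?addr0 // => s hs.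
rewrite (_ : ((s : nat) == t) = false) ?mul0r //; apply/negbTE; move: hs.
by apply: contra => /eqP h; apply/eqP/val_inj.
Qed.

Definition Bf (R : realType) (a : R) (s c : nat) : R :=
  (s == c)%:R + a * (s == c.+1)%:R + a * (s == c.+2)%:R + (s == c.+3)%:R.

Arguments Bf {R}.

Lemma sum_Bf (R : realType) (a : R) N c (g : nat -> R) : (c.+3 < N)%N ->
  \sum_(s < N) Bf a s c * g s = g c + a * g c.+1 + a * g c.+2 + g c.+3.
Proof.
move=> hc.
under eq_bigr do rewrite /Bf !mulrDl -!mulrA.
rewrite !big_split /= -!mulr_sumr !sum_pick //; lia.
Qed.

Lemma Btilde_Bf (R : realType) n (a : R) s (c : 'I_n) : (s < n.+3)%N ->
  Btilde n a (inord s) c = Bf a s c.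
Proof.
move=> hs; have hc := ltn_ord c.
rewrite /Btilde mxE inordK //.
case: eqP => [s0|sn0].
  subst s; rewrite /Bf /= eq_sym; case: eqP => //= _; rewrite ?mulr0 ?addr0 //.
case: eqP => [sN|sN].
  subst s; rewrite /Bf.
  have -> : (n.+2 == c) = false by apply/eqP; lia.
  have -> : (n.+2 == c.+1) = false by apply/eqP; lia.
  have -> : (n.+2 == c.+2) = false by apply/eqP; lia.
  have -> : (n.+2 == c.+3) = ((c : nat) == n.-1) by apply/eqP/eqP; lia.
  by rewrite /= !mulr0 !add0r.
rewrite /Etilde mxE inordK; last lia.
rewrite /Bf.
repeat match goal with |- context [ (?x == ?y)%N ] => case: (@eqP _ x y) => ? end;
  try (exfalso; lia); rewrite /= ?mulr1n ?mulr0n; ring.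
Qed.
Lemma key (R : realType) (r A B C : R) (i j k N : nat) :
 (i < j)%N -> (j < k)%N -> (k <= N)%N -> r != 0 -> `|r| < 2/5 ->
 A * r^+i + B * r^+j + C * r^+k = 0 ->
 A * r^+(N-i) + B * r^+(N-j) + C * r^+(N-k) = 0 ->
 A * (-1)^+i + B * (-1)^+j + C * (-1)^+k = 0 -> A = 0 /\ B = 0 /\ C = 0.
Proof.
move=> hij hjk hkN r0 hr E1 E2 E3.
have t0 : 0 <= `|r| by [].
have t1 : `|r| <= 1 by lra.
have p1 m : (1 <= m)%N -> `|r| ^+ m <= `|r|.
  by move=> hm; rewrite -[X in _ <= X]expr1; apply: ler_wiXn2l.
have p2 m : (2 <= m)%N -> `|r| ^+ m <= `|r| ^+ 2.
  by move=> hm; apply: ler_wiXn2l.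
have e1 : A + B * r^+(j-i) + C * r^+(k-i) = 0.
  apply: (mulfI (expf_neq0 i r0)); rewrite mulr0 -E1.
  have hj : r^+j = r^+i * r^+(j-i) by rewrite -exprD subnKC // ltnW.
  have hk : r^+k = r^+i * r^+(k-i) by rewrite -exprD subnKC // ltnW // (ltn_trans hij).
  rewrite hj hk; ring.
have e2 : C + B * r^+(k-j) + A * r^+(k-i) = 0.
  apply: (mulfI (expf_neq0 (N-k) r0)); rewrite mulr0 -E2.
  have hj : r^+(N-j) = r^+(N-k) * r^+(k-j) by rewrite -exprD; congr (_ ^+ _); lia.
  have hi : r^+(N-i) = r^+(N-k) * r^+(k-i) by rewrite -exprD; congr (_ ^+ _); lia.
  rewrite hj hi; ring.
have b1 : `|A| <= `|r| * `|B| + `|r|^+2 * `|C|.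
  have -> : A = - (B * r^+(j-i) + C * r^+(k-i)) by lra.
  rewrite normrN; apply: le_trans (ler_normD _ _) _.
  rewrite !normrM !normrX; apply: lerD; rewrite mulrC; apply: ler_wpM2r => //.
    apply: p1; lia.
  apply: p2; lia.
have b2 : `|C| <= `|r| * `|B| + `|r|^+2 * `|A|.
  have -> : C = - (B * r^+(k-j) + A * r^+(k-i)) by lra.
  rewrite normrN; apply: le_trans (ler_normD _ _) _.
  rewrite !normrM !normrX; apply: lerD; rewrite mulrC; apply: ler_wpM2r => //.
    apply: p1; lia.
  apply: p2; lia.
have b3 : `|B| <= `|A| + `|C|.
  have : `|B * (-1)^+j| = `|- (A * (-1)^+i + C * (-1)^+k)| by congr (`|_|); lra.
  rewrite normrN !normrM !normrX normrN1 !expr1n !mulr1 => ->.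
  by apply: le_trans (ler_normD _ _) _; rewrite !normrM !normrX normrN1 !expr1n !mulr1.
have hA := normr_ge0 A; have hB := normr_ge0 B; have hC := normr_ge0 C.
have h1 : `|r| * `|B| <= `|r| * (`|A| + `|C|) by apply: ler_wpM2l.
have h2 : (1 - 2 * `|r| - `|r|^+2) * (`|A| + `|C|) <= 0 by nra.
have h3 : `|A| + `|C| <= 0.
  have hpos : 0 < 1 - 2 * `|r| - `|r|^+2 by nra.
  by move: h2; rewrite pmulr_rle0.
have hA0 : `|A| = 0 by lra.
have hC0 : `|C| = 0 by lra.
have hB0 : `|B| = 0 by lra.
by move: hA0 hB0 hC0 => /normr0_eq0 -> /normr0_eq0 -> /normr0_eq0 ->.
Qed.

Lemma root_small (R : realType) (a : R) : 5 < `|a| ->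
  exists r : R, [/\ r != 0, `|r| < 2/5 & 1 + a*r + a*r^+2 + r^+3 = 0].
Proof.
move=> ha.
set b := a - 1.
have hb : 16 <= b ^+ 2.
  case: (lerP 0 a) => h; [rewrite ger0_norm // in ha | rewrite ltr0_norm // in ha];
  rewrite /b; nra.
set D := Num.sqrt (b ^+ 2 - 4).
have hD : D ^+ 2 = b ^+ 2 - 4 by rewrite sqr_sqrtr //; lra.
have D0 : 0 <= D by apply: sqrtr_ge0.
case: (lerP 0 a) => h; [rewrite ger0_norm // in ha | rewrite ltr0_norm // in ha].
- have hb0 : 4 < b by rewrite /b; lra.
  have d1 : D < b by nra.
  have d2 : b - 4/5 < D by nra.
  exists ((D - b) / 2); split.
  + apply/eqP => h0; lra.
  + rewrite ltr0_norm; lra.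
  + have q : ((D - b) / 2) ^+ 2 + b * ((D - b) / 2) + 1 = 0.
      rewrite -[_ ^+ 2]/(_ * _) ; rewrite expr2 in hD; nra.
    have -> : a = b + 1 by rewrite /b; ring.
    set x := (D - b) / 2 in q *.
    have -> : 1 + (b + 1) * x + (b + 1) * x ^+ 2 + x ^+ 3 = (1 + x) * (x ^+ 2 + b * x + 1) by ring.
    by rewrite q mulr0.
- have hb0 : b < -6 by rewrite /b; lra.
  have d1 : D < - b by nra.
  have d2 : - b - 4/5 < D by nra.
  exists ((- b - D) / 2); split.
  + apply/eqP => h0; lra.
  + rewrite gtr0_norm; lra.
  + have q : ((- b - D) / 2) ^+ 2 + b * ((- b - D) / 2) + 1 = 0.
      rewrite -[_ ^+ 2]/(_ * _) ; rewrite expr2 in hD; nra.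
    have -> : a = b + 1 by rewrite /b; ring.
    set x := (- b - D) / 2 in q *.
    have -> : 1 + (b + 1) * x + (b + 1) * x ^+ 2 + x ^+ 3 = (1 + x) * (x ^+ 2 + b * x + 1) by ring.
    by rewrite q mulr0.
Qed.

Arguments sum_pick {R N t} f _.
Arguments sum_Bf {R} a N c g _.
Arguments root_small {R a} _.
Arguments key {R r A B C i j k N} _ _ _ _ _ _ _ _.

Lemma size_kept n (i j k : 'I_n.+3) : (i < j)%N -> (j < k)%N ->
  size (kept_rows n i j k) = n.
Proof.
move=> hij hjk.
rewrite /kept_rows size_filter.
have := count_predC (fun x => x \in [:: (i : nat); (j : nat); (k : nat)]) (iota 0 n.+3).
rewrite size_iota.
have -> : count (fun x => x \in [:: (i : nat); (j : nat); (k : nat)]) (iota 0 n.+3) = 3%N.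
  rewrite -size_filter.
  have hp : perm_eq [seq x <- iota 0 n.+3 | x \in [:: (i : nat); (j : nat); (k : nat)]]
                    [:: (i : nat); (j : nat); (k : nat)].
    apply: uniq_perm.
    - by apply: filter_uniq; apply: iota_uniq.
    - rewrite /= !inE; apply/and3P; split => //; apply/negP; try (case/orP => /eqP);
        move=> /eqP ?; lia.
    - move=> x; rewrite mem_filter mem_iota add0n /=.
      apply/andP/idP => [[]//|h]; split => //.
      by move: h; rewrite !inE => /or3P [] /eqP ->.
  by rewrite (perm_size hp).
move=> h; apply: (@addnI 3); rewrite [LHS]h; lia.
Qed.

Theorem proposition5p2 (R : realType) (n : nat) (a : R) (ha : 5 < `|a|)
    (i j k : 'I_n.+3) (hij : (i < j)%N) (hjk : (j < k)%N) :
  \det (del3rows (Btilde n a) i j k) != 0.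
Proof.
apply/negP; rewrite -det_tr => /det0P [v vn0 hv].
pose w s := \sum_(c < n) v 0 c * Bf a s c.
have hsz := @size_kept _ _ _ _ hij hjk.
have hw0 : forall s, (s < n.+3)%N -> s != i -> s != j -> s != k -> w s = 0.
  move=> s hs si sj sk.
  have hin : s \in kept_rows n i j k.
    by rewrite mem_filter mem_iota /= hs !inE negb_or si negb_or sj sk.
  have hr : (index s (kept_rows n i j k) < n)%N by rewrite -[X in (_ < X)%N]hsz index_mem.
  have := congr1 (fun m : 'rV[R]_n => m 0 (Ordinal hr)) hv; rewrite !mxE => <-.
  rewrite /w; apply: eq_bigr => c _; rewrite 2!mxE nth_index // Btilde_Bf //.
have hsum : forall g : nat -> R, \sum_(s < n.+3) w s * g s =
    \sum_(c < n) v 0 c * (g c + a * g c.+1 + a * g c.+2 + g c.+3).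
  move=> g; rewrite /w.
  under eq_bigr do rewrite mulr_suml.
  rewrite exchange_big /=; apply: eq_bigr => c _.
  under eq_bigr do rewrite -mulrA.
  by rewrite -mulr_sumr sum_Bf //; have := ltn_ord c; lia.
have hsum3 : forall g : nat -> R, \sum_(s < n.+3) w s * g s = w i * g i + w j * g j + w k * g k.
  move=> g.
  rewrite -(sum_pick (fun s => w s * g s) (ltn_ord i))
          -(sum_pick (fun s => w s * g s) (ltn_ord j))
          -(sum_pick (fun s => w s * g s) (ltn_ord k)) -!big_split /=.
  apply: eq_bigr => s _.
  have [si|si] := eqVneq (s : nat) i.
    have -> : ((s : nat) == j) = false by apply/eqP; lia.
    have -> : ((s : nat) == k) = false by apply/eqP; lia.
    by rewrite /=; ring.
  have [sj|sj] := eqVneq (s : nat) j.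
    have -> : ((s : nat) == k) = false by apply/eqP; lia.
    by rewrite /=; ring.
  have [sk|sk] := eqVneq (s : nat) k.
    by rewrite /=; ring.
  by rewrite hw0 //=; ring.
have [r [r0 rsmall pr]] := root_small ha.
have E1 : w i * r ^+ i + w j * r ^+ j + w k * r ^+ k = 0.
  rewrite -(hsum3 (fun s => r ^+ s)) (hsum (fun s => r ^+ s)) big1 // => c _.
  have -> : r ^+ c + a * r ^+ c.+1 + a * r ^+ c.+2 + r ^+ c.+3 =
            r ^+ c * (1 + a * r + a * r ^+ 2 + r ^+ 3) by rewrite !exprS; ring.
  by rewrite pr !mulr0.
have E2 : w i * r ^+ (n.+2 - i) + w j * r ^+ (n.+2 - j) + w k * r ^+ (n.+2 - k) = 0.
  rewrite -(hsum3 (fun s => r ^+ (n.+2 - s))) (hsum (fun s => r ^+ (n.+2 - s))) big1 // => c _.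
  have hc := ltn_ord c.
  have -> : (n.+2 - c = (n.-1 - c).+3)%N by lia.
  have -> : (n.+2 - c.+1 = (n.-1 - c).+2)%N by lia.
  have -> : (n.+2 - c.+2 = (n.-1 - c).+1)%N by lia.
  have -> : (n.+2 - c.+3 = (n.-1 - c))%N by lia.
  have -> : r ^+ (n.-1 - c).+3 + a * r ^+ (n.-1 - c).+2 + a * r ^+ (n.-1 - c).+1 + r ^+ (n.-1 - c) =
            r ^+ (n.-1 - c) * (1 + a * r + a * r ^+ 2 + r ^+ 3) by rewrite !exprS; ring.
  by rewrite pr !mulr0.
have E3 : w i * (-1) ^+ i + w j * (-1) ^+ j + w k * (-1) ^+ k = 0.
  rewrite -(hsum3 (fun s => (-1) ^+ s)) (hsum (fun s => (-1) ^+ s)) big1 // => c _.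
  have -> : (-1) ^+ c + a * (-1) ^+ c.+1 + a * (-1) ^+ c.+2 + (-1) ^+ c.+3 =
            (-1) ^+ c * (1 + a * (-1) + a * (-1) ^+ 2 + (-1) ^+ 3) :> R by rewrite !exprS; ring.
  have -> : 1 + a * (-1) + a * (-1) ^+ 2 + (-1) ^+ 3 = 0 :> R by ring.
  by rewrite !mulr0.
have hkN : (k <= n.+2)%N by rewrite -ltnS ltn_ord.
have [wi [wj wk]] := key hij hjk hkN r0 rsmall E1 E2 E3.
have hwall : forall s, (s < n.+3)%N -> w s = 0.
  move=> s hs.
  have [->|si] := eqVneq s i => //.
  have [->|sj] := eqVneq s j => //.
  have [->|sk] := eqVneq s k => //.
  exact: hw0.
have hv0 : forall m (c : 'I_n), (c < m)%N -> v 0 c = 0.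
  elim=> [|m IH] c hc //.
  have hc3 : (c < n.+3)%N by have := ltn_ord c; lia.
  have := hwall c hc3.
  rewrite /w (bigD1 c) //= big1 ?addr0.
    have -> : Bf a c c = 1.
      rewrite /Bf eqxx.
      have -> : ((c : nat) == c.+1) = false by apply/eqP; lia.
      have -> : ((c : nat) == c.+2) = false by apply/eqP; lia.
      have -> : ((c : nat) == c.+3) = false by apply/eqP; lia.
      by rewrite /=; ring.
    by rewrite mulr1.
  move=> c' hc'.
  have [lt|ge] := ltnP c' c.
    by rewrite IH ?mul0r //; lia.
  have hne : c' != c by [].
  have hgt : (c < c')%N.
    by rewrite ltn_neqAle ge andbT; apply: contra hne => /eqP h; apply/eqP/val_inj.
  rewrite /Bf.
  have -> : ((c : nat) == c') = false by apply/eqP; lia.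
  have -> : ((c : nat) == c'.+1) = false by apply/eqP; lia.
  have -> : ((c : nat) == c'.+2) = false by apply/eqP; lia.
  have -> : ((c : nat) == c'.+3) = false by apply/eqP; lia.
  by rewrite /=; ring.
move/eqP: vn0; apply; apply/rowP => c; rewrite !mxE.
have -> : (0 : 'I_1) = ord0 by apply/val_inj.
exact: (hv0 c.+1).
Qed.
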